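(* Let $p$ be a prime, $n\ge1$, and $a_1,\dots,a_n\in\mathbb{Z}$. Define $\mathfrak{b}':\{0,\dots,p-1\}^n\to\mathbb{Z}$ by $\mathfrak{b}'(x_1,\dots,x_n)=\sum_{i=1}^na_ix_i$, and let $r:\mathbb{Z}\to\{0,\dots,p^n-1\}$ be reduction modulo $p^n$. Then $r\circ\mathfrak{b}':\{0,\dots,p-1\}^n\to\{0,\dots,p^n-1\}$ is bijective if and only if, after relabelling the indices $1,\dots,n$ if necessary, $v(a_i)=n-i$ for $1\le i\le n$, where $v$ denotes the $p$-adic valuation. *)

(* Defs.v *)
From mathcomp Require Import all_boot all_order all_algebra all_fingroup.
Unset Printing Implicit Defensive.
Import GRing.Theory Num.Theory.
Local Open Scope ring_scope.

Definition bprime (p n : nat) (a : 'I_n -> int) (x : {ffun 'I_n -> 'I_p}) : int :=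
  \sum_(i < n) a i * (x i : nat)%:Z.

Arguments bprime p {n} a x.

Definition redmod (N : nat) (z : int) : nat := `|(z %% N%:Z)%Z|%N.

(* p-adic valuation on Z, with v(0) = infinity represented by None *)
Definition padicv (p : nat) (z : int) : option nat :=
  if z == 0 then None else Some (logn p `|z|%N).

(* Main.v *)
Require Import Defs.
From mathcomp Require Import all_boot all_order all_algebra all_fingroup all_field.
From mathcomp Require Import zify.

Section Helpers.
Import GRing.Theory Num.Theory.
Local Open Scope ring_scope.

Lemma redmod_lt (N : nat) (z : int) : (0 < N)%N -> (redmod N z < N)%N.
Proof.
move=> N0; rewrite /redmod -ltz_nat gez0_abs ?modz_ge0 ?ltz_pmod //.
by rewrite eqz_nat -lt0n.
Qed.

Lemma redmodE (N : nat) (z : int) : (0 < N)%N -> (redmod N z)%:Z = (z %% N)%Z.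
Proof. by move=> N0; rewrite /redmod gez0_abs ?modz_ge0 // eqz_nat -lt0n. Qed.

Lemma expz_mod (z : algC) (M : nat) (e : int) : (0 < M)%N -> z ^+ M = 1 ->
  z ^ e = z ^+ (redmod M e).
Proof.
move=> M0 zM.
have zu : z \is a GRing.unit.
  rewrite unitfE; apply/eqP=> z0; move: zM; rewrite z0 expr0n gtn_eqF //.
  by move=> /esym/eqP; rewrite oner_eq0.
rewrite {1}(divz_eq e M) exprzDr // -redmodE // mulrC -exprz_exp.
rewrite exprzAC; change (z ^ (M:int)) with (z ^+ M); by rewrite zM exp1rz mulr1.
Qed.

Lemma dvd_diff_small (p : nat) (x y : 'I_p) : (p %| `|x%:Z - y%:Z|)%N -> x = y.
Proof.
move=> H; apply/val_inj => /=.
have hx := ltn_ord x; have hy := ltn_ord y.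
have: (`|x%:Z - y%:Z| < p)%N by lia.
move=> Hl; have := dvdn_leq _ H.
case E: (`|x%:Z - y%:Z|)%N => [|k].
  lia.
move=> /(_ isT); lia.
Qed.

Lemma surj_of_inj (p n : nat) (F : {ffun 'I_n -> 'I_p} -> nat) :
  (forall x, F x < p ^ n)%N -> injective F ->
  forall y : 'I_(p ^ n), exists x, F x = y.
Proof.
move=> Flt Finj.
pose h x : 'I_(p ^ n) := Ordinal (Flt x).
have hinj : injective h by move=> x1 x2 /(congr1 val) /= /Finj.
have [g hg gh] : bijective h by apply: inj_card_bij => //; rewrite card_ffun !card_ord.
by move=> y; exists (g y); rewrite -[F _]/(val (h (g y))) gh.
Qed.

Lemma sum_reindex (p n : nat) (F : {ffun 'I_n -> 'I_p} -> nat) (G : nat -> algC) :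
  (forall x, F x < p ^ n)%N -> injective F ->
  \sum_x G (F x) = \sum_(y < p ^ n) G y.
Proof.
move=> Flt Finj.
pose h x : 'I_(p ^ n) := Ordinal (Flt x).
have hinj : injective h by move=> x1 x2 /(congr1 val) /= /Finj.
have hb : bijective h by apply: inj_card_bij => //; rewrite card_ffun !card_ord.
by rewrite (reindex h) //=; apply: onW_bij.
Qed.

Lemma key (p n k : nat) (a : 'I_n -> int) : prime p -> (k < n)%N ->
  injective (fun x : {ffun 'I_n -> 'I_p} => redmod (p ^ n) (bprime p a x)) ->
  exists i, padicv p (a i) == Some k.
Proof.
move=> pp kn Hinj.
have p0 : (0 < p)%N by apply: prime_gt0.
have p1 : (1 < p)%N by apply: prime_gt1.
have N0 : (0 < p ^ n)%N by rewrite expn_gt0 p0.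
have M0 : (0 < p ^ k.+1)%N by rewrite expn_gt0 p0.
have [z zprim] := C_prim_root_exists M0.
have zN : z ^+ (p ^ n) = 1.
  apply/eqP; rewrite -(prim_order_dvd zprim) dvdn_Pexp2l //.
have zn1 : z != 1.
  apply/eqP=> z1; have := prim_order_dvd zprim 1; rewrite z1 expr1 eqxx.
  rewrite dvdn1 => /esym/eqP; rewrite -(expn0 p) => /eqP.
  by rewrite eqn_exp2l.
have zu : z \is a GRing.unit.
  by rewrite unitfE; apply/eqP=> z0; move: zN; rewrite z0 expr0n gtn_eqF // => /esym/eqP; rewrite oner_eq0.
have S0 : \sum_x z ^ (bprime p a x) = 0.
  transitivity (\sum_(x : {ffun 'I_n -> 'I_p}) z ^+ (redmod (p ^ n) (bprime p a x))).
    by apply: eq_bigr => x _; apply: expz_mod.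
  rewrite (@sum_reindex p n (fun x => redmod (p ^ n) (bprime p a x)) (fun y => z ^+ y)) //; last first.
    by move=> x; apply: redmod_lt.
  apply/eqP; have := subrX1 z (p ^ n); rewrite zN subrr => /esym/eqP.
  by rewrite mulf_eq0 subr_eq0 (negbTE zn1).
have S1 : \sum_x z ^ (bprime p a x) =
    \prod_(i < n) \sum_(t : 'I_p) z ^ (a i * (t : nat)%:Z).
  rewrite bigA_distr_bigA /=; apply: eq_bigr => x _.
  rewrite /bprime (big_morph (fun e => z ^ e) (exprzDr zu) (expr0z z)) //.
move: S0; rewrite S1 => /eqP /prodf_eq0 [i _ q]; exists i.
set w := z ^ a i.
have Ew : \sum_(t : 'I_p) z ^ (a i * (t : nat)%:Z) = \sum_(t < p) w ^+ t.
  by apply: eq_bigr => t _; rewrite /w -exprz_exp.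
move: q; rewrite Ew => /eqP Sw.
have w1 : w != 1.
  apply/eqP=> w1; move: Sw; rewrite w1.
  under eq_bigr do rewrite expr1n.
  rewrite sumr_const card_ord => /eqP; rewrite pnatr_eq0; move/eqP=> e; move: p0; by rewrite e.
have wp : w ^+ p = 1.
  by apply/eqP; rewrite -subr_eq0 subrX1 Sw mulr0.
have expz1 e : (z ^ e == 1) = ((p ^ k.+1)%:Z %| e)%Z.
  rewrite (expz_mod z (p ^ k.+1) e M0 (prim_expr_order zprim)) -(prim_order_dvd zprim).
  have rl := redmod_lt _ e M0; have re := redmodE _ e M0.
  apply/idP/idP.
  - move=> /dvdn_leq H; apply/dvdz_mod0P; rewrite -re.
    case E: redmod => [//|r]; rewrite E in H rl; have := H isT; lia.
  - move/dvdz_mod0P; rewrite -re => /eqP; rewrite eqz_nat => /eqP ->; exact: dvdn0.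
have H1 : ((p ^ k)%:Z %| a i)%Z.
  have : z ^ (a i * p%:Z) == 1 by rewrite -exprz_exp; apply/eqP; exact: wp.
  by rewrite expz1 expnSr PoszM dvdz_mul2r // eqz_nat -lt0n.
have H2 : ~~ ((p ^ k.+1)%:Z %| a i)%Z by rewrite -expz1.
rewrite dvdzE /= in H1; rewrite dvdzE /= in H2.
have ai0 : a i != 0.
  by apply/eqP=> e; move: H2; rewrite e /= dvdn0.
rewrite /padicv (negbTE ai0); apply/eqP; congr Some.
have ag : (0 < `|a i|)%N by rewrite absz_gt0.
rewrite pfactor_dvdn // in H1; rewrite pfactor_dvdn // in H2; lia.
Qed.

Lemma inj_of_val (p n : nat) (a : 'I_n -> int) (s : {perm 'I_n}) : prime p ->
  (forall i, padicv p (a (s i)) = Some (n - i.+1)%N) ->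
  injective (fun x : {ffun 'I_n -> 'I_p} => redmod (p ^ n) (bprime p a x)).
Proof.
move=> pp Hv x y /= Exy.
have p0 : (0 < p)%N by apply: prime_gt0.
have N0 : (0 < p ^ n)%N by rewrite expn_gt0 p0.
have Hd : ((p ^ n)%:Z %| bprime p a x - bprime p a y)%Z.
  by rewrite -eqz_mod_dvd -!redmodE // Exy.
pose b i := a (s i).
pose D i := (x (s i) : nat)%:Z - (y (s i) : nat)%:Z.
have HS : bprime p a x - bprime p a y = \sum_i b i * D i.
  rewrite /bprime -sumrB (reindex_inj (@perm_inj _ s)) /=.
  by apply: eq_bigr => i _; rewrite mulrBr.
rewrite HS in Hd.
have claim : forall m (i : 'I_n), (n <= i + m)%N -> D i = 0.
  elim=> [|m IH] i Hi; first by have := ltn_ord i; lia.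
  case: (leqP n (i + m)) => [|Hlt]; first exact: IH.
  have Hrest : forall j, j != i -> ((p ^ m.+1)%:Z %| b j * D j)%Z.
    move=> j ji; case: (ltngtP j i) => [jlt|jgt|jeq].
    - apply: dvdz_mulr; have := Hv j; rewrite /padicv -/(b j).
      case: eqP => // /eqP bj0 [lg]; rewrite dvdzE /= pfactor_dvdn ?absz_gt0 //.
      lia.
    - by rewrite IH ?mulr0 ?dvdz0 //; lia.
    - by move: ji; rewrite (val_inj jeq) eqxx.
  have Hall : ((p ^ m.+1)%:Z %| \sum_j b j * D j)%Z.
    apply: dvdz_trans Hd; rewrite dvdzE /=; apply: dvdn_exp2l; lia.
  move: Hall; rewrite (bigD1 i) //= => Hall.
  have Hr : ((p ^ m.+1)%:Z %| \sum_(j < n | j != i) b j * D j)%Z.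
    by apply: rpred_sum.
  have := rpredB Hall Hr; rewrite addrK => Hi'.
  have := Hv i; rewrite /padicv -/(b i).
  case: eqP => // /eqP bi0 [lg].
  have bg : (0 < `|b i|)%N by rewrite absz_gt0.
  have [u cu Eu] := pfactor_coprime pp bg.
  rewrite dvdzE abszM Eu lg /= in Hi'.
  have e1 : (n - i.+1 = m)%N by lia.
  rewrite e1 expnSr -mulnA [(p ^ m * _)%N]mulnC mulnA [(u * _)%N]mulnC -mulnA in Hi'.
  rewrite [(p * p ^ m)%N]mulnC dvdn_pmul2l ?expn_gt0 ?p0 // Gauss_dvdr // in Hi'.
  by rewrite /D (dvd_diff_small _ _ _ Hi') subrr.
apply/ffunP => j; rewrite -(permKV s j); apply/val_inj => /=.
have := claim n (s^-1 j)%g; rewrite leq_addl => /(_ isT) /eqP.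
by rewrite /D subr_eq0 eqz_nat => /eqP.
Qed.
End Helpers.

Theorem propositionA2 (p n : nat) (a : 'I_n -> int) :
  prime p -> (0 < n)%N ->
  ( [/\ (forall x, redmod (p ^ n) (bprime p a x) < p ^ n)%N,
        injective (fun x : {ffun 'I_n -> 'I_p} => redmod (p ^ n) (bprime p a x))
      & (forall y : nat, (y < p ^ n)%N ->
           exists x : {ffun 'I_n -> 'I_p}, redmod (p ^ n) (bprime p a x) = y)]
    <->
    exists s : {perm 'I_n}, forall i : 'I_n, padicv p (a (s i)) = Some (n - i.+1)%N ).
Proof.
move=> pp n0; have p0 : (0 < p)%N by apply: prime_gt0.
have N0 : (0 < p ^ n)%N by rewrite expn_gt0 p0.
split.
- case=> _ Hinj _.
  have H : forall k : 'I_n, exists i, padicv p (a i) == Some (k : nat).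
    by move=> k; apply: key.
  pose g k := xchoose (H k).
  have gP k : padicv p (a (g k)) = Some (val k) by apply/eqP; exact: (xchooseP (H k)).
  have ginj : injective g.
    by move=> k1 k2 E; apply/val_inj; have := gP k1; rewrite E gP => -[].
  exists (perm (inj_comp ginj (@rev_ord_inj n))) => i.
  by rewrite permE /= gP.
- case=> s Hv; have Hinj := @inj_of_val p n a s pp Hv.
  have Hlt : forall x : {ffun 'I_n -> 'I_p}, (redmod (p ^ n) (bprime p a x) < p ^ n)%N.
    by move=> x; apply: redmod_lt.
  split => //.
  move=> y yl; have [x Ex] := surj_of_inj _ _ _ Hlt Hinj (Ordinal yl).
  by exists x.
Qed.
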